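(* For $\mathfrak X_1,\mathfrak X_2,\mathfrak X_3\in\mathbb M^{GHPU}$, $\mathbb d^{GHPU}(\mathfrak X_1,\mathfrak X_3)\le\mathbb d^{GHPU}(\mathfrak X_1,\mathfrak X_2)+\mathbb d^{GHPU}(\mathfrak X_2,\mathfrak X_3)$.
   Context: $\mathbb M^{GHPU}$: 4-tuples $(X,d,\mu,\eta)$ with $(X,d)$ compact metric, $\mu$ finite Borel, $\eta:\mathbb R\to X$ continuous such that for each $\epsilon>0$ there is $T>0$ with $d(\eta(\pm t),\eta(\pm T))\le\epsilon$ for $t\ge T$. $\mathbb d^{GHPU}(\mathfrak X_1,\mathfrak X_2)$ is the infimum over compact metric spaces $(W,D)$ and isometric embeddings $\iota_i:X_i\to W$ of the $D$-Hausdorff distance between $\iota_1(X_1),\iota_2(X_2)$ plus the $D$-Prokhorov distance between $(\iota_1)_*\mu_1,(\iota_2)_*\mu_2$ plus $\sup_tD(\iota_1\eta_1(t),\iota_2\eta_2(t))$. *)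

(* Defs.v *)
From mathcomp Require Import all_boot all_order all_algebra.
From mathcomp Require Import all_classical all_reals all_analysis.
Set Implicit Arguments. Unset Strict Implicit. Unset Printing Implicit Defensive.
Import Order.TTheory GRing.Theory Num.Theory.
Import numFieldNormedType.Exports.
Local Open Scope classical_set_scope.
Local Open Scope ring_scope.

Section GHPU_defs.
Variable R : realType.

Definition is_metric (X : Type) (d : X -> X -> R) : Prop :=
  [/\ forall x y, 0 <= d x y,
      forall x y, d x y = 0 <-> x = y,
      forall x y, d x y = d y x &
      forall x y z, d x z <= d x y + d y z].

Definition oball (X : Type) (d : X -> X -> R) (x : X) (r : R) : set X :=
  [set y | d x y < r].

Definition dopen (X : Type) (d : X -> X -> R) (U : set X) : Prop :=
  forall x, U x -> exists2 r : R, 0 < r & oball d x r `<=` U.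

Definition dborel (X : Type) (d : X -> X -> R) : set (set X) :=
  <<s [set U | dopen d U] >>.

Definition dcompact (X : Type) (d : X -> X -> R) : Prop :=
  forall C : set (set X), (forall U, C U -> dopen d U) ->
    setT `<=` \bigcup_(U in C) U ->
    exists2 F : set (set X), finite_set F & F `<=` C /\ setT `<=` \bigcup_(U in F) U.

(** finite (nonnegative, real-valued) Borel measure on (X,d);
    only its values on Borel sets are meaningful *)
Definition finite_borel_measure (X : Type) (d : X -> X -> R) (mu : set X -> R)
  : Prop :=
  [/\ mu set0 = 0,
      forall A, dborel d A -> 0 <= mu A &
      forall F : nat -> set X, (forall n, dborel d (F n)) -> trivIset setT F ->
        (fun n => \sum_(0 <= i < n) mu (F i)) @ \oo --> mu (\bigcup_i F i)].

Definition curve_continuous (X : Type) (d : X -> X -> R) (eta : R -> X) : Prop :=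
  forall t (e : R), 0 < e -> exists2 del : R, 0 < del &
    forall s, `|s - t| < del -> d (eta s) (eta t) < e.

Definition curve_ends (X : Type) (d : X -> X -> R) (eta : R -> X) : Prop :=
  forall e : R, 0 < e -> exists2 T : R, 0 < T &
    forall t, T <= t -> d (eta t) (eta T) <= e /\ d (eta (- t)) (eta (- T)) <= e.

Record GHPU := MkGHPU {
  gh_X : Type;
  gh_d : gh_X -> gh_X -> R;
  gh_mu : set gh_X -> R;
  gh_eta : R -> gh_X;
  gh_metric : is_metric gh_d;
  gh_compact : dcompact gh_d;
  gh_measure : finite_borel_measure gh_d gh_mu;
  gh_cont : curve_continuous gh_d gh_eta;
  gh_ends : curve_ends gh_d gh_eta }.

Definition isometric_embedding (X W : Type) (d : X -> X -> R)
  (D : W -> W -> R) (i : X -> W) : Prop :=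
  forall x y, D (i x) (i y) = d x y.

Definition nbhd_set (W : Type) (D : W -> W -> R) (A : set W) (e : R) : set W :=
  [set w | exists2 a, A a & D w a < e].

Definition hausdorff_dist (W : Type) (D : W -> W -> R) (A B : set W) : R :=
  inf [set e : R | 0 < e /\ A `<=` nbhd_set D B e /\ B `<=` nbhd_set D A e].

Definition pushforward (X W : Type) (i : X -> W) (mu : set X -> R) : set W -> R :=
  fun B => mu (i @^-1` B).

Definition prokhorov_dist (W : Type) (D : W -> W -> R) (nu1 nu2 : set W -> R) : R :=
  inf [set e : R | 0 < e /\ forall A, dborel D A ->
          nu1 A <= nu2 (nbhd_set D A e) + e /\ nu2 A <= nu1 (nbhd_set D A e) + e].

Definition uniform_dist (W : Type) (D : W -> W -> R) (f g : R -> W) : R :=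
  sup [set D (f t) (g t) | t in [set: R]].

Definition dGHPU (X1 X2 : GHPU) : R :=
  inf [set r : R | exists (W : Type) (D : W -> W -> R)
                          (i1 : gh_X X1 -> W) (i2 : gh_X X2 -> W),
     [/\ is_metric D, dcompact D,
         isometric_embedding (@gh_d X1) D i1,
         isometric_embedding (@gh_d X2) D i2 &
         r = hausdorff_dist D (range i1) (range i2)
             + prokhorov_dist D (pushforward i1 (@gh_mu X1)) (pushforward i2 (@gh_mu X2))
             + uniform_dist D (i1 \o @gh_eta X1) (i2 \o @gh_eta X2)]].

End GHPU_defs.

(* Main.v *)
Require Import Defs.
From mathcomp Require Import all_boot all_order all_algebra.
From mathcomp Require Import all_classical all_reals all_analysis.
From mathcomp Require Import lra.
Set Implicit Arguments. Unset Strict Implicit. Unset Printing Implicit Defensive.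
Import Order.TTheory GRing.Theory Num.Theory.
Import numFieldNormedType.Exports.
Local Open Scope classical_set_scope.
Local Open Scope ring_scope.

Section Aux.
Variable R : realType.
Lemma dborel_open (X : Type) (d : X -> X -> R) U : dopen d U -> dborel d U.
Proof. by move=> oU; apply: sub_sigma_algebra. Qed.

Lemma dborel_setC (X : Type) (d : X -> X -> R) A : dborel d A -> dborel d (~` A).
Proof. by move=> bA; rewrite -setTD; apply: sigma_algebraCD. Qed.

Lemma dborel_setU (X : Type) (d : X -> X -> R) A B :
  dborel d A -> dborel d B -> dborel d (A `|` B).
Proof.
move=> bA bB; rewrite -bigcup2E; apply: sigma_algebra_bigcup => -[|[|n]] //=.
exact: sigma_algebra0.
Qed.

Lemma dborel_setD (X : Type) (d : X -> X -> R) A B :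
  dborel d A -> dborel d B -> dborel d (B `\` A).
Proof.
move=> bA bB; rewrite setDE -{1}(setCK B) -setCU.
by apply: dborel_setC; apply: dborel_setU => //; apply: dborel_setC.
Qed.

Lemma mu_ge0 (X : Type) (d : X -> X -> R) mu A :
  finite_borel_measure d mu -> dborel d A -> 0 <= mu A.
Proof. by case=> _ h _; apply: h. Qed.

Lemma mu_mono (X : Type) (d : X -> X -> R) mu A B :
  finite_borel_measure d mu -> dborel d A -> dborel d B -> A `<=` B ->
  mu A <= mu B.
Proof.
move=> hm bA bB AB; case: (hm) => m0 mge mU.
pose F := fun n : nat => match n with 0%N => A | 1%N => B `\` A | _ => set0 end.
have bF n : dborel d (F n).
  by case: n => [|[|n]] //=; [apply: dborel_setD | apply: sigma_algebra0].
have tF : trivIset setT F.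
  move=> i j _ _ [x [Fi Fj]].
  case: i j Fi Fj => [|[|i]] [|[|j]] //=.
  all: try (by move=> ? []); try (by move=> [] ? ?).
have UF : \bigcup_i F i = B.
  apply/seteqP; split=> [x [[|[|n]]] _ //= | x Bx]; first exact: AB.
    by case. have [Ax|nAx] := pselect (A x).
    by exists 0%N.
  by exists 1%N.
have := mU F bF tF; rewrite UF => cv.
have <- := cvg_lim _ cv => //.
apply: limr_ge; first exact: cvgP cv.
exists 1%N => // n /= n1.
rewrite (big_ltn n1) /= lerDl; apply: sumr_ge0 => i _.
by apply: mge.
Qed.

Lemma finite_ub (T : Type) (F : set T) (g : T -> R -> Prop) :
  finite_set F -> (forall U M M', M <= M' -> g U M -> g U M') ->
  (forall U, F U -> exists M, g U M) -> exists M, forall U, F U -> g U M.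
Proof.
move=> /(@finite_fsetP {classic T}) [S ->] mono h.
suff: forall s : seq {classic T}, (forall U, U \in s -> exists M, g U M) ->
    exists M, forall U, U \in s -> g U M.
  by move=> /(_ (finmap.enum_fset S) h) [M hM]; exists M.
elim=> [|a s IH] hs; first by exists 0.
have [Ma gMa] := hs a (mem_head a s).
have [Ms gMs] : exists M, forall U, U \in s -> g U M.
  by apply: IH => U Us; apply: hs; rewrite in_cons Us orbT.
exists (Num.max Ma Ms) => U; rewrite in_cons => /orP[/eqP->|Us].
  by apply: mono gMa; rewrite le_max lexx.
by apply: mono (gMs _ Us); rewrite le_max lexx orbT.
Qed.

Lemma oball_open (X : Type) (d : X -> X -> R) x r :
  is_metric d -> dopen d (oball d x r).
Proof.
case=> d0 _ dsym dtri y; rewrite /oball /= => dxy.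
exists (r - d x y); first by rewrite subr_gt0.
move=> z; rewrite /oball /= => h.
have := dtri x y z; lra.
Qed.

Lemma nbhd_open (X : Type) (d : X -> X -> R) A e :
  is_metric d -> dopen d (nbhd_set d A e).
Proof.
case=> d0 _ dsym dtri y [a Aa dya].
exists (e - d y a); first by rewrite subr_gt0.
move=> z /= h; exists a => //.
have := dtri z y a; rewrite (dsym z y); rewrite /oball /= in h; lra.
Qed.

Lemma compact_bounded (X : Type) (d : X -> X -> R) (x0 : X) :
  is_metric d -> dcompact d -> exists M, forall x, d x0 x <= M.
Proof.
move=> md cd.
pose C := range (fun n : nat => oball d x0 n%:R).
have oC : forall U, C U -> dopen d U by move=> _ [n _ <-]; apply: oball_open.
have cC : setT `<=` \bigcup_(U in C) U.
  move=> x _; exists (oball d x0 (Num.bound (d x0 x))%:R).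
    by exists (Num.bound (d x0 x)).
  rewrite /oball /=; apply: archi_boundP; by case: md.
have [F finF [FC cov]] := cd C oC cC.
have mono : forall U (M M' : R), M <= M' -> (forall x, U x -> d x0 x <= M) ->
    (forall x, U x -> d x0 x <= M').
  by move=> U M M' MM' h x Ux; apply: le_trans (h x Ux) MM'.
have hex : forall U, F U -> exists M : R, forall x, U x -> d x0 x <= M.
  move=> U /FC [n _ <-]; exists n%:R => x; rewrite /oball /= => h.
  exact: ltW.
have [M hM] := @finite_ub _ F (fun U M => forall x, U x -> d x0 x <= M) finF mono hex.
exists M => x; have [U FU Ux] := cov x I; exact: hM U FU x Ux.
Qed.


Lemma iso_open (X W : Type) (dX : X -> X -> R) (D : W -> W -> R) (f : X -> W) U :
  isometric_embedding dX D f -> dopen D U -> dopen dX (f @^-1` U).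
Proof.
move=> iso oU x /= Ufx; have [r r0 hr] := oU (f x) Ufx.
exists r => // y; rewrite /oball /= => dxy; apply: hr; rewrite /oball /= iso //.
Qed.

Lemma iso_borel (X W : Type) (dX : X -> X -> R) (D : W -> W -> R) (f : X -> W) B :
  isometric_embedding dX D f -> dborel D B -> dborel dX (f @^-1` B).
Proof.
move=> iso; move: B; apply: smallest_sub.
- split.
  + by rewrite /= preimage_set0; apply: sigma_algebra0.
  + by move=> A /= bA; rewrite setTD; exact: dborel_setC bA.
  + by move=> F bF; rewrite /= preimage_bigcup; apply: sigma_algebra_bigcup.
- by move=> U oU; apply: dborel_open; apply: iso_open.
Qed.

Lemma dborelT (X : Type) (d : X -> X -> R) : dborel d setT.
Proof. by apply: dborel_open => x _; exists 1 => //. Qed.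

Lemma inf_range_le (T : Type) (g : T -> R) x : (forall x, 0 <= g x) -> inf (range g) <= g x.
Proof.
move=> g0; apply: ge_inf; last by exists x.
by exists 0 => _ [y _ <-].
Qed.

Lemma le_inf_range (T : Type) (g : T -> R) a (t0 : T) :
  (forall x, a <= g x) -> a <= inf (range g).
Proof.
move=> h; apply: lb_le_inf; first by exists (g t0), t0.
by move=> _ [y _ <-].
Qed.

Lemma inf_ge0 (E : set R) : (forall x, E x -> 0 < x) -> 0 <= inf E.
Proof.
move=> h; have [[x Ex]|nE] := pselect (E !=set0).
  by apply: lb_le_inf; [exists x | move=> y /h /ltW].
by rewrite inf_out // => -[].
Qed.

Lemma sup_ge0 (E : set R) : (forall x, E x -> 0 <= x) -> 0 <= sup E.
Proof.
move=> h; have [hs|nhs] := pselect (has_sup E).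
  have [x Ex] := hs.1; apply: le_trans (h x Ex) _; exact: sup_upper_bound.
by rewrite sup_out.
Qed.

Lemma inf_add (A B C : set R) : A !=set0 -> B !=set0 -> has_lbound C ->
  (forall a b, A a -> B b -> inf C <= a + b) -> inf C <= inf A + inf B.
Proof.
move=> nA nB lC h.
have h1 b : B b -> inf C - b <= inf A.
  by move=> Bb; apply: lb_le_inf => // a Aa; rewrite lerBlDr; exact: h.
rewrite -lerBlDl; apply: lb_le_inf => // b Bb; rewrite lerBlDl -lerBlDr.
exact: h1.
Qed.

Lemma prok_step (X1 X2 X3 W W' W'' : Type) (d1 : X1 -> X1 -> R) (d2 : X2 -> X2 -> R)
  (d3 : X3 -> X3 -> R) (mu1 : set X1 -> R) (mu2 : set X2 -> R) (mu3 : set X3 -> R)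
  (D : W -> W -> R) (D' : W' -> W' -> R) (D'' : W'' -> W'' -> R)
  (i1 : X1 -> W) (i2 : X2 -> W) (j2 : X2 -> W') (j3 : X3 -> W')
  (k1 : X1 -> W'') (k3 : X3 -> W'') (e e' dl : R) :
  is_metric D -> is_metric D' -> is_metric D'' ->
  finite_borel_measure d1 mu1 -> finite_borel_measure d2 mu2 ->
  finite_borel_measure d3 mu3 ->
  isometric_embedding d1 D i1 -> isometric_embedding d2 D i2 ->
  isometric_embedding d2 D' j2 -> isometric_embedding d3 D' j3 ->
  isometric_embedding d1 D'' k1 -> isometric_embedding d3 D'' k3 ->
  (forall A, dborel D A -> Defs.pushforward i1 mu1 A <= Defs.pushforward i2 mu2 (nbhd_set D A e) + e) ->
  (forall A, dborel D' A -> Defs.pushforward j2 mu2 A <= Defs.pushforward j3 mu3 (nbhd_set D' A e') + e') ->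
  (forall x1 x2 x3, D'' (k3 x3) (k1 x1) <= D (i1 x1) (i2 x2) + D' (j2 x2) (j3 x3)) ->
  0 < dl ->
  forall A, dborel D'' A ->
    Defs.pushforward k1 mu1 A <= Defs.pushforward k3 mu3 (nbhd_set D'' A (e + e' + 2 * dl)) + (e + e').
Proof.
move=> mD mD' mD'' hm1 hm2 hm3 ii1 ii2 ij2 ij3 ik1 ik3 hP hP' hc dl0 A bA.
have [D0 DE Ds Dt] := mD; have [D'0 D'E D's D't] := mD'.
rewrite /Defs.pushforward.
pose A1 := k1 @^-1` A.
have bA1 : dborel d1 A1 by apply: iso_borel.
pose B := nbhd_set D (i1 @` A1) dl.
have oB : dopen D B by apply: nbhd_open.
have s1 : mu1 A1 <= mu1 (i1 @^-1` B).
  apply: mu_mono hm1 bA1 _ _; first by apply: dborel_open; apply: iso_open.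
  by move=> x A1x; exists (i1 x); [exists x | rewrite (proj2 (DE _ _) erefl)].
have s2 := hP B (dborel_open oB); rewrite /Defs.pushforward in s2.
pose V2 := i2 @^-1` (nbhd_set D B e).
have oV2 : dopen d2 V2 by apply: iso_open => //; apply: nbhd_open.
pose B' := nbhd_set D' (j2 @` V2) dl.
have oB' : dopen D' B' by apply: nbhd_open.
have s3 : mu2 V2 <= mu2 (j2 @^-1` B').
  apply: mu_mono hm2 (dborel_open oV2) _ _; first by apply: dborel_open; apply: iso_open.
  by move=> x V2x; exists (j2 x); [exists x | rewrite (proj2 (D'E _ _) erefl)].
have s4 := hP' B' (dborel_open oB'); rewrite /Defs.pushforward in s4.
pose A3 := j3 @^-1` (nbhd_set D' B' e').
have oA3 : dopen d3 A3 by apply: iso_open => //; apply: nbhd_open.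
have s5 : mu3 A3 <= mu3 (k3 @^-1` nbhd_set D'' A (e + e' + 2 * dl)).
  apply: mu_mono hm3 (dborel_open oA3) _ _.
    by apply: dborel_open; apply: iso_open => //; apply: nbhd_open.
  move=> x3 [b' [_ [x2 V2x2 <-] db'] dx3b'].
  move: V2x2; rewrite /V2 /= => -[b [_ [x1 A1x1 <-] db] dx2b].
  exists (k1 x1) => //.
  apply: le_lt_trans (hc x1 x2 x3) _.
  have := Dt (i1 x1) b (i2 x2); have := D't (j2 x2) b' (j3 x3).
  have := Ds (i1 x1) b; have := Ds b (i2 x2); have := D's (j2 x2) b'.
  have := D's b' (j3 x3); lra.
rewrite /V2 in s3; rewrite /A3 in s5.
lra.
Qed.
Lemma compact_pull (X W : Type) (dX : X -> X -> R) (D : W -> W -> R) (f : X -> W) :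
  dcompact dX -> isometric_embedding dX D f ->
  forall C : set (set W), (forall U, C U -> dopen D U) ->
  (forall x, exists2 U, C U & U (f x)) ->
  exists2 G : set (set W), finite_set G & G `<=` C /\ (forall x, exists2 U, G U & U (f x)).
Proof.
move=> cX iso C oC cov.
pose CX := (fun U => f @^-1` U) @` C.
have oCX : forall V, CX V -> dopen dX V.
  move=> _ [U CU <-] x /= Ufx.
  have [r r0 hr] := oC U CU (f x) Ufx.
  exists r => // y; rewrite /oball /= => dxy; apply: hr; rewrite /oball /= iso //.
have cCX : setT `<=` \bigcup_(V in CX) V.
  move=> x _; have [U CU Ufx] := cov x; exists (f @^-1` U) => //; by exists U.
have [FX finFX [FXC covX]] := cX CX oCX cCX.
have : forall V, exists U, FX V -> C U /\ V = f @^-1` U.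
  move=> V; have [FV|nFV] := pselect (FX V).
    have [U CU <-] := FXC V FV; by exists U.
  by exists set0.
move=> /choice [pick hpick].
exists (pick @` FX); first exact: finite_image.
split; first by move=> _ [V FV <-]; have [] := hpick V FV.
move=> x; have [V FV Vx] := covX x I.
exists (pick V); first by exists V.
by have [_ e] := hpick V FV; rewrite e in Vx.
Qed.

Lemma compact_union (X Y W : Type) (dX : X -> X -> R) (dY : Y -> Y -> R)
  (D : W -> W -> R) (f : X -> W) (g : Y -> W) :
  dcompact dX -> dcompact dY -> isometric_embedding dX D f ->
  isometric_embedding dY D g ->
  (forall w, (exists x, w = f x) \/ (exists y, w = g y)) -> dcompact D.
Proof.
move=> cX cY iX iY sur C oC cov.
have [GX finGX [GXC covX]] := compact_pull cX iX oC (fun x => cov (f x) I).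
have [GY finGY [GYC covY]] := compact_pull cY iY oC (fun y => cov (g y) I).
exists (GX `|` GY); first by rewrite finite_setU.
split; first by move=> U [/GXC|/GYC].
move=> w _; case: (sur w) => [[x ->]|[y ->]].
  by have [U GU Ux] := covX x; exists U => //; left.
by have [U GU Ux] := covY y; exists U => //; right.
Qed.

Section Glue.
Variables (X Y : Type) (dX : X -> X -> R) (dY : Y -> Y -> R) (c : X -> Y -> R).
Hypotheses (mX : is_metric dX) (mY : is_metric dY).
Hypothesis c1 : forall x x' y, c x y <= dX x x' + c x' y.
Hypothesis c2 : forall x y y', c x y <= c x y' + dY y' y.
Hypothesis c3 : forall x x' y, dX x x' <= c x y + c x' y.
Hypothesis c4 : forall x y y', dY y y' <= c x y + c x y'.

Definition Dp (z z' : X + Y) : R :=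
  match z, z' with
  | inl x, inl x' => dX x x'
  | inl x, inr y => c x y
  | inr y, inl x => c x y
  | inr y, inr y' => dY y y'
  end.

Lemma Dp_sym z z' : Dp z z' = Dp z' z.
Proof.
case: mX => _ _ sX _; case: mY => _ _ sY _.
by case: z z' => [x|y] [x'|y'] //=.
Qed.

Lemma Dp_tri z z' z'' : Dp z z'' <= Dp z z' + Dp z' z''.
Proof.
case: mX => _ _ sX tX; case: mY => _ _ sY tY.
case: z => [x|y]; case: z' => [x'|y']; case: z'' => [x''|y''] /=.
- exact: tX.
- exact: c1.
- exact: c3.
- by have := c2 x y'' y'; rewrite sY; lra.
- by have := c1 x'' x' y; rewrite sX; lra.
- exact: c4.
- by have := c2 x'' y y'; rewrite sY; lra.
- exact: tY.
Qed.

Lemma Dp_ge0 z z' : 0 <= Dp z z'.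
Proof.
case: mX => dX0 _ _ _; case: mY => dY0 _ _ _.
case: z => [x|y]; case: z' => [x'|y'] //=.
- by have := c3 x x y'; have := dX0 x x; lra.
- by have := c3 x' x' y; have := dX0 x' x'; lra.
Qed.

Lemma Dp_refl z : Dp z z = 0.
Proof.
case: mX => _ hX _ _; case: mY => _ hY _ _.
by case: z => [x|y] /=; [apply/hX|apply/hY].
Qed.

Definition GW := {f : X + Y -> R | exists z, f = Dp z}.
Definition gk (z : X + Y) : GW := exist _ (Dp z) (ex_intro _ z erefl).

Lemma gW_eq (f g : X + Y -> R) (pf : exists z, f = Dp z) (pg : exists z, g = Dp z) :
  f = g -> exist _ f pf = exist _ g pg :> GW.
Proof. by move=> e; subst g; congr exist; apply: Prop_irrelevance. Qed.

Lemma gk_surj (w : GW) : exists z, w = gk z.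
Proof. by case: w => f [z e]; exists z; apply: gW_eq. Qed.

Definition grep (w : GW) : X + Y := projT1 (cid (proj2_sig w)).
Definition GD (w w' : GW) : R := proj1_sig w (grep w').

Lemma GD_k z z' : GD (gk z) (gk z') = Dp z z'.
Proof.
rewrite /GD /grep /=; case: cid => r /= e.
by rewrite [LHS]Dp_sym -e Dp_sym.
Qed.

Lemma GD_metric : is_metric GD.
Proof.
split.
- by move=> w w'; have [z ->] := gk_surj w; have [z' ->] := gk_surj w'; rewrite GD_k Dp_ge0.
- move=> w w'; have [z ->] := gk_surj w; have [z' ->] := gk_surj w'; rewrite GD_k.
  split=> [h|e]; last by rewrite -(GD_k z z') e GD_k Dp_refl.
  apply: gW_eq; apply: funext => u; apply/eqP; rewrite eq_le; apply/andP; split.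
    by have := Dp_tri z z' u; lra.
  by have := Dp_tri z' z u; rewrite (Dp_sym z' z); lra.
- by move=> w w'; have [z ->] := gk_surj w; have [z' ->] := gk_surj w'; rewrite !GD_k Dp_sym.
- move=> w w' w''; have [z ->] := gk_surj w; have [z' ->] := gk_surj w'.
  by have [z'' ->] := gk_surj w''; rewrite !GD_k Dp_tri.
Qed.

Lemma GD_compact : dcompact dX -> dcompact dY -> dcompact GD.
Proof.
move=> cX cY.
apply: (@compact_union _ _ _ dX dY GD (gk \o inl) (gk \o inr)) => //.
- by move=> x x'; exact: GD_k.
- by move=> y y'; exact: GD_k.
- move=> w; have [[x|y] ->] := gk_surj w; [left|right]; eexists; reflexivity.
Qed.

Lemma glue_exists : dcompact dX -> dcompact dY ->
  exists (W : Type) (D : W -> W -> R) (f : X -> W) (g : Y -> W),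
  [/\ is_metric D, dcompact D, isometric_embedding dX D f,
      isometric_embedding dY D g &
      forall x y, D (g y) (f x) = c x y /\ D (f x) (g y) = c x y].
Proof.
move=> cX cY; exists GW, GD, (gk \o inl), (gk \o inr); split.
- exact: GD_metric.
- exact: GD_compact.
- by move=> x x'; exact: GD_k.
- by move=> y y'; exact: GD_k.
- by move=> x y; split; exact: GD_k.
Qed.

End Glue.

End Aux.

Section Main.
Variable R : realType.

Definition Sset (X1 X2 : GHPU R) : set R :=
  [set r : R | exists (W : Type) (D : W -> W -> R)
                          (i1 : gh_X X1 -> W) (i2 : gh_X X2 -> W),
     [/\ is_metric D, dcompact D,
         isometric_embedding (@gh_d R X1) D i1,
         isometric_embedding (@gh_d R X2) D i2 &
         r = hausdorff_dist D (range i1) (range i2)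
             + prokhorov_dist D (Defs.pushforward i1 (@gh_mu R X1)) (Defs.pushforward i2 (@gh_mu R X2))
             + uniform_dist D (i1 \o @gh_eta R X1) (i2 \o @gh_eta R X2)]].

Lemma dGHPUE (X1 X2 : GHPU R) : dGHPU X1 X2 = inf (Sset X1 X2).
Proof. reflexivity. Qed.

Lemma haus_ne (W : Type) (D : W -> W -> R) (A B : set W) :
  is_metric D -> dcompact D -> A !=set0 -> B !=set0 ->
  [set e | 0 < e /\ A `<=` nbhd_set D B e /\ B `<=` nbhd_set D A e] !=set0.
Proof.
move=> mD cD [a0 Aa0] [b0 Bb0].
have [D0 DE Ds Dt] := mD.
have [M hM] := compact_bounded a0 mD cD.
have M0 : 0 <= M by apply: le_trans (hM a0); apply: D0.
exists (2 * M + 1); split; first lra.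
split.
- move=> a Aa; exists b0 => //.
  have := Dt a a0 b0; have := hM a; have := hM b0; rewrite (Ds a a0); lra.
- move=> b Bb; exists a0 => //.
  have := hM b; rewrite Ds; lra.
Qed.

Lemma prok_ne (X1 X2 W : Type) (d1 : X1 -> X1 -> R) (d2 : X2 -> X2 -> R)
  (mu1 : set X1 -> R) (mu2 : set X2 -> R) (D : W -> W -> R) (i1 : X1 -> W) (i2 : X2 -> W) :
  is_metric D -> finite_borel_measure d1 mu1 -> finite_borel_measure d2 mu2 ->
  isometric_embedding d1 D i1 -> isometric_embedding d2 D i2 ->
  [set e | 0 < e /\ forall A, dborel D A ->
      Defs.pushforward i1 mu1 A <= Defs.pushforward i2 mu2 (nbhd_set D A e) + e /\
      Defs.pushforward i2 mu2 A <= Defs.pushforward i1 mu1 (nbhd_set D A e) + e] !=set0.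
Proof.
move=> mD hm1 hm2 ii1 ii2.
have T1 := mu_ge0 hm1 (@dborelT _ _ d1); have T2 := mu_ge0 hm2 (@dborelT _ _ d2).
exists (mu1 setT + mu2 setT + 1); split; first lra.
move=> A bA; rewrite /Defs.pushforward; split.
- have := mu_mono hm1 (iso_borel ii1 bA) (@dborelT _ _ d1) (@subsetT _ _).
  have := mu_ge0 hm2 (iso_borel ii2 (dborel_open (nbhd_open (A:=A) (e:=mu1 setT + mu2 setT + 1) mD))).
  lra.
- have := mu_mono hm2 (iso_borel ii2 bA) (@dborelT _ _ d2) (@subsetT _ _).
  have := mu_ge0 hm1 (iso_borel ii1 (dborel_open (nbhd_open (A:=A) (e:=mu1 setT + mu2 setT + 1) mD))).
  lra.
Qed.

Lemma unif_le (W : Type) (D : W -> W -> R) (f g : R -> W) :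
  is_metric D -> dcompact D -> forall t, D (f t) (g t) <= uniform_dist D f g.
Proof.
move=> mD cD t; have [D0 DE Ds Dt] := mD.
have [M hM] := compact_bounded (f 0) mD cD.
apply: sup_upper_bound; last by exists t.
split; first by exists (D (f 0) (g 0)), 0.
exists (M + M) => _ [s _ <-].
have := Dt (f s) (f 0) (g s); have := hM (f s); have := hM (g s); rewrite (Ds (f s) (f 0)).
lra.
Qed.

Lemma Sset_ge0 (X1 X2 : GHPU R) r : Sset X1 X2 r -> 0 <= r.
Proof.
move=> [W [D [i1 [i2 [mD cD ii1 ii2 ->]]]]].
have [D0 _ _ _] := mD.
apply: addr_ge0; first apply: addr_ge0.
- by apply: inf_ge0 => e [].
- by apply: inf_ge0 => e [].
- by apply: sup_ge0 => _ [t _ <-].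
Qed.

Lemma Sset_ne (X1 X2 : GHPU R) : Sset X1 X2 !=set0.
Proof.
pose p1 := gh_eta X1 0; pose p2 := gh_eta X2 0.
have [d10 d1E d1s d1t] := gh_metric X1.
have [d20 d2E d2s d2t] := gh_metric X2.
pose c := fun x y => gh_d x p1 + 1 + gh_d p2 y.
have c1 : forall x x' y, c x y <= gh_d x x' + c x' y.
  by move=> x x' y; rewrite /c; have := d1t x x' p1; lra.
have c2 : forall x y y', c x y <= c x y' + gh_d y' y.
  by move=> x y y'; rewrite /c; have := d2t p2 y' y; lra.
have c3 : forall x x' y, gh_d x x' <= c x y + c x' y.
  by move=> x x' y; rewrite /c; have := d1t x p1 x'; have := d20 p2 y; have := d1s p1 x'; lra.
have c4 : forall x y y', gh_d y y' <= c x y + c x y'.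
  by move=> x y y'; rewrite /c; have := d2t y p2 y'; have := d2s y p2; have := d10 x p1; lra.
have [W [D [f [g [mD cD fi gi _]]]]] :=
  @glue_exists R _ _ _ _ c (@gh_metric R X1) (@gh_metric R X2) c1 c2 c3 c4
    (@gh_compact R X1) (@gh_compact R X2).
by eexists; exists W, D, f, g; split.
Qed.


Lemma Sset_tri (X1 X2 X3 : GHPU R) s s' :
  Sset X1 X2 s -> Sset X2 X3 s' -> dGHPU X1 X3 <= s + s'.
Proof.
move=> [W [D [i1 [i2 [mD cD ii1 ii2 ->]]]]] [W' [D' [j2 [j3 [mD' cD' ij2 ij3 ->]]]]].
have [D0 DE Ds Dt] := mD; have [D'0 D'E D's D't] := mD'.
have hm1 := @gh_measure R X1; have hm2 := @gh_measure R X2; have hm3 := @gh_measure R X3.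
pose p1 := gh_eta X1 0; pose p2 := gh_eta X2 0; pose p3 := gh_eta X3 0.
pose S x y x2 := D (i1 x) (i2 x2) + D' (j2 x2) (j3 y).
pose c x y := inf (range (S x y)).
have S0 : forall x y x2, 0 <= S x y x2 by move=> x y x2; rewrite /S addr_ge0.
have cle : forall x y x2, c x y <= S x y x2 by move=> x y x2; apply: inf_range_le.
have cge : forall x y a, (forall x2, a <= S x y x2) -> a <= c x y.
  by move=> x y a h; apply: (le_inf_range p2 h).
have c1 : forall x x' y, c x y <= gh_d x x' + c x' y.
  move=> x x' y; suff: c x y - gh_d x x' <= c x' y by lra.
  apply: (cge) => x2; have := cle x y x2; rewrite /S.
  have := Dt (i1 x) (i1 x') (i2 x2); rewrite ii1; lra.
have c2 : forall x y y', c x y <= c x y' + gh_d y' y.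
  move=> x y y'; suff: c x y - gh_d y' y <= c x y' by lra.
  apply: (cge) => x2; have := cle x y x2; rewrite /S.
  have := D't (j2 x2) (j3 y') (j3 y); rewrite ij3; lra.
have c3 : forall x x' y, gh_d x x' <= c x y + c x' y.
  move=> x x' y; suff: gh_d x x' - c x y <= c x' y by lra.
  apply: (cge) => b; suff: gh_d x x' - S x' y b <= c x y by lra.
  apply: (cge) => a; rewrite /S.
  have := Dt (i1 x) (i2 a) (i1 x'); have := Dt (i2 a) (i2 b) (i1 x').
  have := ii2 a b; have := ij2 a b; have := D't (j2 a) (j3 y) (j2 b).
  have := D's (j3 y) (j2 b); have := Ds (i2 b) (i1 x'); have := ii1 x x'.
  lra.
have c4 : forall x y y', gh_d y y' <= c x y + c x y'.
  move=> x y y'; suff: gh_d y y' - c x y <= c x y' by lra.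
  apply: (cge) => b; suff: gh_d y y' - S x y' b <= c x y by lra.
  apply: (cge) => a; rewrite /S.
  have := ij3 y y'; have := D't (j3 y) (j2 a) (j3 y'); have := D't (j2 a) (j2 b) (j3 y').
  have := D's (j3 y) (j2 a); have := ij2 a b; have := ii2 a b.
  have := Dt (i2 a) (i1 x) (i2 b); have := Ds (i2 a) (i1 x).
  lra.
have [W'' [D'' [k1 [k3 [mD'' cD'' ik1 ik3 hk]]]]] :=
  @glue_exists R _ _ _ _ c (@gh_metric R X1) (@gh_metric R X3) c1 c2 c3 c4
    (@gh_compact R X1) (@gh_compact R X3).
have hk1 : forall x1 x2 x3, D'' (k3 x3) (k1 x1) <= D (i1 x1) (i2 x2) + D' (j2 x2) (j3 x3).
  by move=> x1 x2 x3; rewrite (hk x1 x3).1; exact: cle.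
have hk2 : forall x3 x2 x1, D'' (k1 x1) (k3 x3) <= D' (j3 x3) (j2 x2) + D (i2 x2) (i1 x1).
  move=> x3 x2 x1; rewrite (hk x1 x3).2; have := cle x1 x3 x2; rewrite /S.
  have := Ds (i2 x2) (i1 x1); have := D's (j3 x3) (j2 x2); lra.
have Sr : Sset X1 X3 (hausdorff_dist D'' (range k1) (range k3)
             + prokhorov_dist D'' (Defs.pushforward k1 (@gh_mu R X1)) (Defs.pushforward k3 (@gh_mu R X3))
             + uniform_dist D'' (k1 \o @gh_eta R X1) (k3 \o @gh_eta R X3)).
  by exists W'', D'', k1, k3; split.
rewrite dGHPUE; apply: le_trans (ge_inf _ Sr) _.
  by exists 0 => r /Sset_ge0.
have hH : hausdorff_dist D'' (range k1) (range k3) <=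
    hausdorff_dist D (range i1) (range i2) + hausdorff_dist D' (range j2) (range j3).
  rewrite /hausdorff_dist; apply: inf_add.
  - by apply: haus_ne => //; [exists (i1 p1); exists p1 | exists (i2 p2); exists p2].
  - by apply: haus_ne => //; [exists (j2 p2); exists p2 | exists (j3 p3); exists p3].
  - by exists 0 => e [e0 _]; apply: ltW.
  move=> e e' [e0 [h1 h2]] [e'0 [h1' h2']].
  apply: ge_inf; first by exists 0 => r [r0 _]; apply: ltW.
  split; first lra.
  split.
  - move=> _ [x1 _ <-].
    have [_ [x2 _ <-] dx] := h1 (i1 x1) (ex_intro2 _ _ x1 I erefl).
    have [_ [x3 _ <-] dx'] := h1' (j2 x2) (ex_intro2 _ _ x2 I erefl).
    exists (k3 x3); first by exists x3.
    have := hk2 x3 x2 x1; have := Ds (i2 x2) (i1 x1); have := D's (j3 x3) (j2 x2); lra.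
  - move=> _ [x3 _ <-].
    have [_ [x2 _ <-] dx'] := h2' (j3 x3) (ex_intro2 _ _ x3 I erefl).
    have [_ [x1 _ <-] dx] := h2 (i2 x2) (ex_intro2 _ _ x2 I erefl).
    exists (k1 x1); first by exists x1.
    have := hk1 x1 x2 x3; have := Ds (i2 x2) (i1 x1); have := D's (j3 x3) (j2 x2); lra.
have hP : prokhorov_dist D'' (Defs.pushforward k1 (@gh_mu R X1)) (Defs.pushforward k3 (@gh_mu R X3)) <=
    prokhorov_dist D (Defs.pushforward i1 (@gh_mu R X1)) (Defs.pushforward i2 (@gh_mu R X2)) +
    prokhorov_dist D' (Defs.pushforward j2 (@gh_mu R X2)) (Defs.pushforward j3 (@gh_mu R X3)).
  rewrite /prokhorov_dist; apply: inf_add.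
  - exact: (prok_ne mD hm1 hm2 ii1 ii2).
  - exact: (prok_ne mD' hm2 hm3 ij2 ij3).
  - by exists 0 => e [e0 _]; apply: ltW.
  move=> e e' [e0 hPe] [e'0 hPe'].
  apply/ler_addgt0Pr => dl dl0.
  have dl2 : 0 < dl / 2 by lra.
  apply: (@le_trans _ _ (e + e' + 2 * (dl / 2))); last lra.
  apply: ge_inf; first by exists 0 => r [r0 _]; apply: ltW.
  split; first lra.
  move=> A bA; split.
  + have := prok_step mD mD' mD'' hm1 hm2 hm3 ii1 ii2 ij2 ij3 ik1 ik3
      (fun A bA => (hPe A bA).1) (fun A bA => (hPe' A bA).1) hk1 dl2 bA.
    move=> h; apply: le_trans h _; apply: lerD => //; lra.
  + have := prok_step mD' mD mD'' hm3 hm2 hm1 ij3 ij2 ii2 ii1 ik3 ik1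
      (fun A bA => (hPe' A bA).2) (fun A bA => (hPe A bA).2) hk2 dl2 bA.
    rewrite (addrC e' e) => h; apply: le_trans h _; apply: lerD => //; lra.
have hU : uniform_dist D'' (k1 \o @gh_eta R X1) (k3 \o @gh_eta R X3) <=
    uniform_dist D (i1 \o @gh_eta R X1) (i2 \o @gh_eta R X2) +
    uniform_dist D' (j2 \o @gh_eta R X2) (j3 \o @gh_eta R X3).
  rewrite [X in X <= _]/uniform_dist; apply: ge_sup.
    by exists (D'' (k1 (gh_eta X1 0)) (k3 (gh_eta X3 0))), 0.
  move=> _ [t _ <-] /=.
  have := hk2 (gh_eta X3 t) (gh_eta X2 t) (gh_eta X1 t).
  have := unif_le (i1 \o @gh_eta R X1) (i2 \o @gh_eta R X2) mD cD t.
  have := unif_le (j2 \o @gh_eta R X2) (j3 \o @gh_eta R X3) mD' cD' t.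
  have := Ds (i2 (gh_eta X2 t)) (i1 (gh_eta X1 t)).
  have := D's (j3 (gh_eta X3 t)) (j2 (gh_eta X2 t)).
  rewrite /=; lra.
lra.
Qed.

End Main.

Theorem lemma2p4 (R : realType) (X1 X2 X3 : GHPU R) :
  dGHPU X1 X3 <= dGHPU X1 X2 + dGHPU X2 X3.
Proof.
rewrite [dGHPU X1 X2]dGHPUE [dGHPU X2 X3]dGHPUE.
rewrite {1}dGHPUE; apply: inf_add.
- exact: Sset_ne.
- exact: Sset_ne.
- by exists 0 => r /Sset_ge0.
move=> s s' h h'; rewrite -dGHPUE; exact: Sset_tri h h'.
Qed.
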